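(* $\operatorname{LLPO}\le_{\mathrm{sW}}\operatorname{Proj}_\mathbb{R}$.
   Context: Represented spaces: a representation of a set $X$ is a partial surjection $\delta_X:\subseteq\mathbb{N}^\mathbb{N}\to X$. For a partial multi-valued function $f:\subseteq X\rightrightarrows Y$, a realizer is a partial $F:\subseteq\mathbb{N}^\mathbb{N}\to\mathbb{N}^\mathbb{N}$ with $\delta_Y(F(p))\in f(\delta_X(p))$ for all $p$ with $\delta_X(p)\in\mathrm{dom}(f)$. Strong Weihrauch reducibility $f\le_{\mathrm{sW}}g$: there are computable partial $H,K:\subseteq\mathbb{N}^\mathbb{N}\to\mathbb{N}^\mathbb{N}$ with $H\circ G\circ K$ a realizer of $f$ for every realizer $G$ of $g$. $\operatorname{LLPO}:\subseteq\mathbb{N}^\mathbb{N}\times\mathbb{N}^\mathbb{N}\rightrightarrows\{0,1\}$: its domain consists of pairs $(p_0,p_1)$ such that there is at most one pair $(j,m)$ with $p_j(m)\ne0$, and $i\in\operatorname{LLPO}(p_0,p_1)$ iff $p_i=0^\mathbb{N}$. $\mathbb{R}$ has the Cauchy representation. $\mathcal{A}(\mathbb{R})$: closed subsets of $\mathbb{R}$ with total information, a name of $A$ consisting of an enumeration of rational open intervals whose union is $\mathbb{R}\setminus A$ together with an enumeration of exactly the rational open intervals meeting $A$. $\operatorname{Proj}_\mathbb{R}:\subseteq\mathbb{R}\times\mathcal{A}(\mathbb{R})\rightrightarrows\mathbb{R}$ maps $(x,A)$ with $A$ nonempty closed to the set of $y\in A$ with $|x-y|=d(x,A)$. *)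

(* Defs.v *)
From Stdlib Require Import Reals Lra Lia List Arith.
From Stdlib Require Import Rtopology.
Import ListNotations.
Open Scope R_scope.

Definition Baire := nat -> nat.

Inductive recf : Type :=
| RZero : recf
| RSucc : recf
| RProj : nat -> recf
| RComp : recf -> list recf -> recf
| RPrim : recf -> recf -> recf
| RMu   : recf -> recf.

Inductive reval : recf -> list nat -> nat -> Prop :=
| ev_zero : forall v, reval RZero v 0
| ev_succ : forall x v, reval RSucc (x :: v) (S x)
| ev_proj : forall i v x, nth_error v i = Some x -> reval (RProj i) v x
| ev_comp : forall f gs v ys z, revals gs v ys -> reval f ys z -> reval (RComp f gs) v z
| ev_prim0 : forall f g v z, reval f v z -> reval (RPrim f g) (0%nat :: v) z
| ev_primS : forall f g n v r z,
    reval (RPrim f g) (n :: v) r -> reval g (n :: r :: v) z ->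
    reval (RPrim f g) (S n :: v) z
| ev_mu : forall f v n,
    reval f (n :: v) 0%nat ->
    (forall m, (m < n)%nat -> exists k, reval f (m :: v) (S k)) ->
    reval (RMu f) v n
with revals : list recf -> list nat -> list nat -> Prop :=
| evs_nil : forall v, revals [] v []
| evs_cons : forall g gs v y ys, reval g v y -> revals gs v ys -> revals (g :: gs) v (y :: ys).

Definition cpair (x y : nat) : nat := (Nat.div ((x + y) * (x + y + 1)) 2 + y)%nat.

Fixpoint enc (l : list nat) : nat :=
  match l with
  | [] => 0%nat
  | x :: t => S (cpair x (enc t))
  end.

Definition recursive_word (w : list nat -> list nat) : Prop :=
  exists e : recf, forall l, reval e [enc l] (enc (w l)).

Definition is_prefix (l l' : list nat) : Prop := exists t, l' = l ++ t.

Definition monotone_word (w : list nat -> list nat) : Prop :=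
  forall l l', is_prefix l l' -> is_prefix (w l) (w l').

Definition pref (p : Baire) (k : nat) : list nat := map p (seq 0 k).

Definition computes (w : list nat -> list nat) (p q : Baire) : Prop :=
  forall n, exists k, nth_error (w (pref p k)) n = Some (q n).

Definition pfun := Baire -> Baire -> Prop.

Definition functional (F : pfun) : Prop :=
  forall p q q', F p q -> F p q' -> q = q'.

(** A partial F is computable if some Type-2 machine (monotone recursive
    word function) computes F(p) on every input p in dom(F). *)
Definition pcomputable (F : pfun) : Prop :=
  functional F /\
  exists w, recursive_word w /\ monotone_word w /\
    forall p q, F p q -> computes w p q.

Definition pcomp3 (H G K : pfun) : pfun :=
  fun p q => exists a b, K p a /\ G a b /\ H b q.

Record rspace := { carrier : Type; delta : Baire -> carrier -> Prop }.

Record problem (X Y : rspace) := {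
  pdom : carrier X -> Prop;
  pval : carrier X -> carrier Y -> Prop }.
Arguments pdom {X Y}.
Arguments pval {X Y}.

Definition realizer {X Y : rspace} (f : problem X Y) (F : pfun) : Prop :=
  forall p x, delta X p x -> pdom f x ->
    exists q, F p q /\ exists y, delta Y q y /\ pval f x y.

Definition sW_le {X Y Z W : rspace} (f : problem X Y) (g : problem Z W) : Prop :=
  exists H K : pfun, pcomputable H /\ pcomputable K /\
    forall G : pfun, functional G -> realizer g G -> realizer f (pcomp3 H G K).

Definition prod_space (X Y : rspace) : rspace :=
  {| carrier := (carrier X * carrier Y)%type;
     delta := fun r xy => delta X (fun n => r (2 * n)%nat) (fst xy) /\
                          delta Y (fun n => r (2 * n + 1)%nat) (snd xy) |}.

Definition baire_space : rspace := {| carrier := Baire; delta := fun p q => p = q |}.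

Definition b2n (b : bool) : nat := if b then 1%nat else 0%nat.
Definition two_space : rspace := {| carrier := bool; delta := fun p b => p 0%nat = b2n b |}.

Definition LLPO : problem (prod_space baire_space baire_space) two_space :=
  @Build_problem (prod_space baire_space baire_space) two_space
  (fun pp : Baire * Baire =>
       forall (j j' : bool) (m m' : nat),
         (if j then snd pp else fst pp) m <> 0%nat ->
         (if j' then snd pp else fst pp) m' <> 0%nat ->
         j = j' /\ m = m')
  (fun (pp : Baire * Baire) (i : bool) =>
       forall m, (if i then snd pp else fst pp) m = 0%nat).

Definition qR (a b c : nat) : R := (INR a - INR b) / INR (S c).
Definition is_rat_code (k : nat) (q : R) : Prop :=
  exists a b c, k = cpair a (cpair b c) /\ q = qR a b c.

Definition real_space : rspace :=
  {| carrier := R;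
     delta := fun p x => forall n, exists q, is_rat_code (p n) q /\ Rabs (x - q) <= / 2 ^ n |}.

Definition is_int_code (k : nat) (lo hi : R) : Prop :=
  exists r s, k = cpair r s /\ is_rat_code r lo /\ is_rat_code s hi.

(** closed subsets with total information: even part enumerates (with k+1 for
    code k, 0 = no information) intervals whose union is the complement; odd part
    enumerates exactly the codes of rational open intervals meeting A. *)
Definition closed_space : rspace :=
  {| carrier := R -> Prop;
     delta := fun p A =>
       (forall x, ~ A x <-> exists n k lo hi,
            p (2 * n)%nat = S k /\ is_int_code k lo hi /\ lo < x < hi) /\
       (forall k, (exists lo hi, is_int_code k lo hi /\ exists x, A x /\ lo < x < hi)
                  <-> exists n, p (2 * n + 1)%nat = S k) |}.

Definition Proj_R : problem (prod_space real_space closed_space) real_space :=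
  @Build_problem (prod_space real_space closed_space) real_space
  (fun xA : R * (R -> Prop) => closed_set (snd xA) /\ exists y, snd xA y)
  (fun (xA : R * (R -> Prop)) (y : R) =>
       snd xA y /\ forall z, snd xA z -> Rabs (fst xA - y) <= Rabs (fst xA - z)).

(* Main.v *)
Require Import Defs.
From Stdlib Require Import Reals Lra Lia List Arith ZArith Rtopology Classical.
Import ListNotations.
Open Scope nat_scope.

Fixpoint tri (s : nat) : nat := match s with 0 => 0 | S n => tri n + S n end.
Lemma tri_eq s : 2 * tri s = s * (s + 1).
Proof. induction s; simpl; nia. Qed.
Lemma cpair_eq x y : cpair x y = tri (x + y) + y.
Proof.
  unfold cpair. f_equal. rewrite <- tri_eq. rewrite Nat.mul_comm. apply Nat.div_mul. lia.
Qed.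
Lemma tri_mono s s' : s < s' -> tri s + s < tri s'.
Proof.
  induction 1; simpl; lia.
Qed.
Lemma cpair_inj x y x' y' : cpair x y = cpair x' y' -> x = x' /\ y = y'.
Proof.
  rewrite !cpair_eq. intros H.
  destruct (lt_eq_lt_dec (x+y) (x'+y')) as [[Hl|He]|Hl].
  - pose proof (tri_mono _ _ Hl). lia.
  - rewrite He in H. lia.
  - pose proof (tri_mono _ _ Hl). lia.
Qed.
Fixpoint unpair (m : nat) : nat * nat :=
  match m with
  | 0 => (0, 0)
  | S m' => let (x, y) := unpair m' in
            match x with 0 => (S y, 0) | S x' => (x', S y) end
  end.
Definition ufst m := fst (unpair m).
Definition usnd m := snd (unpair m).
Lemma cpair_unpair m : cpair (ufst m) (usnd m) = m.
Proof.
  unfold ufst, usnd. induction m; simpl. reflexivity.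
  destruct (unpair m) as [x y]. simpl in *. rewrite cpair_eq in *.
  destruct x; simpl.
  - rewrite !Nat.add_0_r in *. simpl in *. lia.
  - replace (x + S y) with (S x + y) by lia. simpl in *. lia.
Qed.
Lemma ufst_cpair x y : ufst (cpair x y) = x.
Proof.
  pose proof (cpair_unpair (cpair x y)) as H. apply cpair_inj in H. lia.
Qed.
Lemma usnd_cpair x y : usnd (cpair x y) = y.
Proof.
  pose proof (cpair_unpair (cpair x y)) as H. apply cpair_inj in H. lia.
Qed.
Lemma cpair_ge_r x y : y <= cpair x y.
Proof. rewrite cpair_eq. lia. Qed.
Lemma cpair_ge_l x y : x <= cpair x y.
Proof. rewrite cpair_eq. induction (x+y) eqn:E; simpl. lia.
 assert (x <= S n) by lia. lia. Qed.
Lemma usnd_le n : usnd n <= n.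
Proof. rewrite <- (cpair_unpair n) at 2. apply cpair_ge_r. Qed.
Lemma ufst_le n : ufst n <= n.
Proof. rewrite <- (cpair_unpair n) at 2. apply cpair_ge_l. Qed.
Lemma cpair_mono_r x y y' : y <= y' -> cpair x y <= cpair x y'.
Proof.
  intros H. rewrite !cpair_eq. induction H. lia.
  replace (x + S m) with (S (x+m)) by lia. simpl. lia.
Qed.

Definition spec1 P (F : nat -> nat) := forall x, reval P [x] (F x).
Definition spec2 P (F : nat -> nat -> nat) := forall x y, reval P [x;y] (F x y).
Definition spec3 P (F : nat -> nat -> nat -> nat) := forall x y z, reval P [x;y;z] (F x y z).

Inductive expr :=
| EVar (i : nat)
| EConst (n : nat)
| EA1 (P : recf) (F : nat -> nat) (a : expr)
| EA2 (P : recf) (F : nat -> nat -> nat) (a b : expr)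
| EA3 (P : recf) (F : nat -> nat -> nat -> nat) (a b c : expr).

Fixpoint eval (env : list nat) (e : expr) : nat :=
  match e with
  | EVar i => nth i env 0
  | EConst n => n
  | EA1 _ F a => F (eval env a)
  | EA2 _ F a b => F (eval env a) (eval env b)
  | EA3 _ F a b c => F (eval env a) (eval env b) (eval env c)
  end.

Fixpoint ok (n : nat) (e : expr) : Prop :=
  match e with
  | EVar i => i < n
  | EConst _ => True
  | EA1 P F a => spec1 P F /\ ok n a
  | EA2 P F a b => spec2 P F /\ ok n a /\ ok n b
  | EA3 P F a b c => spec3 P F /\ ok n a /\ ok n b /\ ok n c
  end.

Fixpoint cst n := match n with 0 => RZero | S n => RComp RSucc [cst n] end.

Fixpoint comp (e : expr) : recf :=
  match e with
  | EVar i => RProj i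
  | EConst k => cst k
  | EA1 P _ a => RComp P [comp a]
  | EA2 P _ a b => RComp P [comp a; comp b]
  | EA3 P _ a b c => RComp P [comp a; comp b; comp c]
  end.

Lemma cst_ok n v : reval (cst n) v n.
Proof.
  induction n; simpl. constructor.
  econstructor. econstructor. eassumption. constructor. constructor.
Qed.

Lemma comp_ok e env : ok (length env) e -> reval (comp e) env (eval env e).
Proof.
  induction e; simpl; intros H.
  - constructor. apply nth_error_nth'. exact H.
  - apply cst_ok.
  - destruct H as [Hs Ha]. econstructor. econstructor. apply IHe; auto. constructor. apply Hs.
  - destruct H as [Hs [Ha Hb]]. econstructor. econstructor. apply IHe1; auto.
    econstructor. apply IHe2; auto. constructor. apply Hs.
  - destruct H as [Hs [Ha [Hb Hc]]]. econstructor. econstructor. apply IHe1; auto.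
    econstructor. apply IHe2; auto. econstructor. apply IHe3; auto. constructor. apply Hs.
Qed.

Lemma prim_ok f g v (fv : nat) (gv : nat -> nat -> nat) :
  reval f v fv -> (forall n r, reval g (n :: r :: v) (gv n r)) ->
  forall c, reval (RPrim f g) (c :: v) (nat_rect (fun _ => nat) fv gv c).
Proof.
  intros Hf Hg c. induction c; simpl.
  - constructor. exact Hf.
  - econstructor. exact IHc. apply Hg.
Qed.

Lemma succ_spec : spec1 RSucc S.
Proof. intro x. constructor. Qed.

Ltac okt := simpl; repeat split; try lia; auto.
Open Scope nat_scope.

Lemma reval_eq P v a b : reval P v a -> a = b -> reval P v b.
Proof. intros H ->. exact H. Qed.

Ltac primt := intros; eapply reval_eq;
  [ apply prim_ok; [ apply comp_ok; okt | intros; apply comp_ok; okt ] | ].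

Definition addP := RPrim (comp (EVar 0)) (comp (EA1 RSucc S (EVar 1))).
Lemma add_spec : spec2 addP Nat.add.
Proof.
  intros x y. eapply reval_eq.
  apply prim_ok. apply comp_ok; okt. intros; apply comp_ok; okt. apply succ_spec.
  simpl. induction x; simpl; auto.
Qed.
#[export] Hint Resolve succ_spec add_spec : core.
Definition ES a := EA1 RSucc S a.
Definition eadd a b := EA2 addP Nat.add a b.

Definition mulP := RPrim (comp (EConst 0)) (comp (eadd (EVar 1) (EVar 2))).
Lemma mul_spec : spec2 mulP Nat.mul.
Proof.
  intros x y. eapply reval_eq.
  apply prim_ok. apply comp_ok; okt. intros; apply comp_ok; okt.
  simpl. induction x; simpl; lia.
Qed.
#[export] Hint Resolve mul_spec : core.
Definition emul a b := EA2 mulP Nat.mul a b.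

Definition predP := RPrim (comp (EConst 0)) (comp (EVar 0)).
Lemma pred_spec : spec1 predP Nat.pred.
Proof.
  intros x. eapply reval_eq.
  apply prim_ok. apply comp_ok; okt. intros; apply comp_ok; okt.
  simpl. induction x; simpl; lia.
Qed.
#[export] Hint Resolve pred_spec : core.
Definition epred a := EA1 predP Nat.pred a.

Definition subr := RPrim (comp (EVar 0)) (comp (epred (EVar 1))).
Lemma subr_spec : spec2 subr (fun y x => x - y).
Proof.
  intros y x. eapply reval_eq.
  apply prim_ok. apply comp_ok; okt. intros; apply comp_ok; okt.
  simpl. induction y; simpl; lia.
Qed.
#[export] Hint Resolve subr_spec : core.
Definition subP := comp (EA2 subr (fun y x => x - y) (EVar 1) (EVar 0)).
Lemma sub_spec : spec2 subP Nat.sub.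
Proof. intros x y. apply (comp_ok (EA2 subr (fun y x => x - y) (EVar 1) (EVar 0)) [x;y]); okt. Qed.
#[export] Hint Resolve sub_spec : core.
Definition esub a b := EA2 subP Nat.sub a b.

Definition cond (c a b : nat) := match c with 0 => a | S _ => b end.
Definition condP := RPrim (comp (EVar 0)) (comp (EVar 3)).
Lemma cond_spec : spec3 condP cond.
Proof.
  intros c a b. eapply reval_eq.
  apply prim_ok. apply comp_ok; okt. intros; apply comp_ok; okt.
  destruct c; reflexivity.
Qed.
#[export] Hint Resolve cond_spec : core.
Definition econd a b c := EA3 condP cond a b c.

Definition ltn x y := cond (y - x) 0 1.
Definition ltnE := econd (esub (EVar 1) (EVar 0)) (EConst 0) (EConst 1).
Lemma ltn_spec : spec2 (comp ltnE) ltn.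
Proof. intros x y. apply (comp_ok ltnE [x;y]); okt. Qed.
#[export] Hint Resolve ltn_spec : core.
Definition eltn a b := EA2 (comp ltnE) ltn a b.

Definition triP := RPrim (comp (EConst 0)) (comp (eadd (EVar 1) (ES (EVar 0)))).
Lemma tri_spec : spec1 triP tri.
Proof.
  intros x. eapply reval_eq.
  apply prim_ok. apply comp_ok; okt. intros; apply comp_ok; okt.
  simpl. induction x; simpl in *; lia.
Qed.
#[export] Hint Resolve tri_spec : core.
Definition etri a := EA1 triP tri a.

Definition cpairE := eadd (etri (eadd (EVar 0) (EVar 1))) (EVar 1).
Lemma cpair_spec : spec2 (comp cpairE) cpair.
Proof. intros x y. eapply reval_eq. apply (comp_ok cpairE [x;y]); okt.
  simpl. rewrite cpair_eq. reflexivity. Qed.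
#[export] Hint Resolve cpair_spec : core.
Definition ecpair a b := EA2 (comp cpairE) cpair a b.

Lemma tri_le s s' : s <= s' -> tri s <= tri s'.
Proof. induction 1; simpl; lia. Qed.

Ltac ev := cbn -[Nat.sub Nat.add Nat.mul tri cpair ufst usnd cond Nat.pred].
Definition us m := ufst m + usnd m.
Definition muE := esub (ES (EVar 1)) (etri (ES (EVar 0))).
Definition muP := RMu (comp muE).
Lemma mu_spec : spec1 muP us.
Proof.
  intros m. rewrite <- (cpair_unpair m). generalize (ufst m) (usnd m). intros x y.
  unfold us. rewrite ufst_cpair, usnd_cpair.
  constructor.
  - eapply reval_eq. apply (comp_ok muE); okt. ev.
    rewrite cpair_eq. simpl tri. lia.
  - intros z Hz. exists (cpair x y - tri (S z)). eapply reval_eq. apply (comp_ok muE); okt. ev.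
    rewrite cpair_eq. assert (tri (S z) <= tri (x+y)) by (apply tri_le; lia). lia.
Qed.
#[export] Hint Resolve mu_spec : core.

Definition ufstE := esub (EA1 muP us (EVar 0)) (esub (EVar 0) (etri (EA1 muP us (EVar 0)))).
Lemma ufst_spec : spec1 (comp ufstE) ufst.
Proof. intros m. eapply reval_eq. apply (comp_ok ufstE [m]); okt.
  ev. unfold us. rewrite <- (cpair_unpair m). generalize (ufst m) (usnd m). intros x y.
  rewrite !ufst_cpair, !usnd_cpair. rewrite cpair_eq. lia. Qed.
Definition usndE := esub (EVar 0) (etri (EA1 muP us (EVar 0))).
Lemma usnd_spec : spec1 (comp usndE) usnd.
Proof. intros m. eapply reval_eq. apply (comp_ok usndE [m]); okt.
  ev. unfold us. rewrite <- (cpair_unpair m). generalize (ufst m) (usnd m). intros x y.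
  rewrite !ufst_cpair, !usnd_cpair. rewrite cpair_eq. lia. Qed.
#[export] Hint Resolve ufst_spec usnd_spec : core.
Definition eufst a := EA1 (comp ufstE) ufst a.
Definition eusnd a := EA1 (comp usndE) usnd a.
Open Scope nat_scope.

Definition hdc N := cond N 0 (ufst (pred N)).
Definition tlc N := cond N 0 (usnd (pred N)).
Definition hdE := econd (EVar 0) (EConst 0) (eufst (epred (EVar 0))).
Definition tlE := econd (EVar 0) (EConst 0) (eusnd (epred (EVar 0))).
Lemma hd_spec : spec1 (comp hdE) hdc.
Proof. intros x. apply (comp_ok hdE [x]); okt. Qed.
Lemma tl_spec : spec1 (comp tlE) tlc.
Proof. intros x. apply (comp_ok tlE [x]); okt. Qed.
#[export] Hint Resolve hd_spec tl_spec : core.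
Definition ehd a := EA1 (comp hdE) hdc a.

Lemma hdc_enc l : hdc (enc l) = hd 0 l.
Proof. destruct l; simpl; auto. unfold hdc; simpl. apply ufst_cpair. Qed.
Lemma tlc_enc l : tlc (enc l) = enc (tl l).
Proof. destruct l; simpl; auto. unfold tlc; simpl. apply usnd_cpair. Qed.

Definition dropc t N := nat_rect (fun _ => nat) N (fun _ r => tlc r) t.
Definition dropP := RPrim (comp (EVar 0)) (comp (EA1 (comp tlE) tlc (EVar 1))).
Lemma drop_spec : spec2 dropP dropc.
Proof.
  intros t N. eapply reval_eq.
  apply prim_ok. apply comp_ok; okt. intros; apply comp_ok; okt. reflexivity.
Qed.
#[export] Hint Resolve drop_spec : core.
Lemma dropc_enc t l : dropc t (enc l) = enc (skipn t l).
Proof.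
  revert l. induction t; intros l; simpl. reflexivity.
  change (tlc (dropc t (enc l)) = enc (skipn (S t) l)). rewrite IHt, tlc_enc.
  f_equal. clear IHt. revert l. induction t; intros l; destruct l; simpl; auto.
Qed.
Definition nthc t N := hdc (dropc t N).
Definition nthE := EA1 (comp hdE) hdc (EA2 dropP dropc (EVar 0) (EVar 1)).
Lemma nth_spec : spec2 (comp nthE) nthc.
Proof. intros x y. apply (comp_ok nthE [x;y]); okt. Qed.
#[export] Hint Resolve nth_spec : core.
Lemma nthc_enc t l : nthc t (enc l) = nth t l 0.
Proof.
  unfold nthc. rewrite dropc_enc, hdc_enc. revert l; induction t; intros [|x l]; simpl; auto.
Qed.

Fixpoint decf (f N : nat) : list nat :=
  match f with 0 => [] | S f => match N with 0 => [] | S m => ufst m :: decf f (usnd m) end end.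
Lemma decf_ok f N : N <= f -> enc (decf f N) = N.
Proof.
  revert N; induction f; intros N H; simpl. lia.
  destruct N; simpl; auto. rewrite IHf. rewrite cpair_unpair; auto.
  pose proof (usnd_le N). lia.
Qed.
Definition lenc N := length (decf N N).
Definition lenP := RMu dropP.
Lemma len_spec : spec1 lenP lenc.
Proof.
  intros N. unfold lenc. rewrite <- (decf_ok N N) at 1 by lia.
  generalize (decf N N). intros l. constructor.
  - eapply reval_eq. apply drop_spec. rewrite dropc_enc, skipn_all. reflexivity.
  - intros m Hm. destruct (skipn m l) eqn:E.
    + apply (f_equal (@length nat)) in E. rewrite length_skipn in E. simpl in E. lia.
    + exists (cpair n (enc l0)). eapply reval_eq. apply drop_spec. rewrite dropc_enc, E. reflexivity.
Qed.
#[export] Hint Resolve len_spec : core.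

Fixpoint m2 n := match n with 0 => 0 | S n => cond (m2 n) 1 0 end.
Fixpoint d2 n := match n with 0 => 0 | S n => d2 n + m2 n end.
Definition mod2P := RPrim (comp (EConst 0)) (comp (econd (EVar 1) (EConst 1) (EConst 0))).
Lemma mod2_spec : spec1 mod2P m2.
Proof. intros x. eapply reval_eq. apply prim_ok. apply comp_ok; okt. intros; apply comp_ok; okt.
  induction x; simpl in *; auto; rewrite IHx; reflexivity. Qed.
#[export] Hint Resolve mod2_spec : core.
Definition div2P := RPrim (comp (EConst 0)) (comp (eadd (EVar 1) (EA1 mod2P m2 (EVar 0)))).
Lemma div2_spec : spec1 div2P d2.
Proof. intros x. eapply reval_eq. apply prim_ok. apply comp_ok; okt. intros; apply comp_ok; okt.
  induction x; simpl in *; auto; rewrite IHx; reflexivity. Qed.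
#[export] Hint Resolve div2_spec : core.
Definition em2 a := EA1 mod2P m2 a.
Definition ed2 a := EA1 div2P d2 a.
Lemma m2_le n : m2 n <= 1.
Proof. induction n; simpl; auto. destruct (m2 n); simpl; lia. Qed.
Lemma m2SS n : m2 (S (S n)) = m2 n.
Proof. simpl. pose proof (m2_le n). destruct (m2 n) as [|[|]]; simpl; lia. Qed.
Lemma d2SS n : d2 (S (S n)) = S (d2 n).
Proof. simpl. pose proof (m2_le n). destruct (m2 n) as [|[|]]; simpl; lia. Qed.
Lemma m2_even n : m2 (2 * n) = 0.
Proof. induction n; auto. replace (2 * S n) with (S (S (2 * n))) by lia. rewrite m2SS; auto. Qed.
Lemma d2_even n : d2 (2 * n) = n.
Proof. induction n; auto. replace (2 * S n) with (S (S (2 * n))) by lia. rewrite d2SS; auto. Qed.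
Lemma m2_odd n : m2 (2 * n + 1) = 1.
Proof. induction n; auto. replace (2 * S n + 1) with (S (S (2 * n + 1))) by lia. rewrite m2SS; auto. Qed.
Lemma d2_odd n : d2 (2 * n + 1) = n.
Proof. induction n; auto. replace (2 * S n + 1) with (S (S (2 * n + 1))) by lia. rewrite d2SS; auto. Qed.
Lemma d2_le n : 2 * d2 n <= n.
Proof. induction n as [n IH] using (well_founded_induction lt_wf).
  destruct n as [|[|n]]; [simpl; lia|simpl; lia|]. rewrite d2SS. specialize (IH n). lia. Qed.

Definition repc c v := nat_rect (fun _ => nat) 0 (fun _ r => S (cpair v r)) c.
Definition EP := RPrim (comp (EConst 0)) (comp (ES (ecpair (EVar 2) (EVar 1)))).
Lemma EP_spec : spec2 EP repc.
Proof. intros c v. eapply reval_eq. apply prim_ok. apply comp_ok; okt. intros; apply comp_ok; okt.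
  reflexivity. Qed.
#[export] Hint Resolve EP_spec : core.
Lemma repc_enc c v : repc c v = enc (repeat v c).
Proof. induction c; simpl; congruence. Qed.

Definition vH x := cond (ltn (ufst (usnd x)) (ufst x)) 1 0.
Definition HE := let hdx := ehd (EVar 0) in
  EA2 EP repc (EVar 0) (econd (eltn (eufst (eusnd hdx)) (eufst hdx)) (EConst 1) (EConst 0)).
Definition wH (l : list nat) := repeat (vH (hd 0 l)) (enc l).
Lemma wH_rec : recursive_word wH.
Proof.
  exists (comp HE). intros l. eapply reval_eq. apply (comp_ok HE [enc l]); okt.
  unfold wH. rewrite <- repc_enc. simpl. rewrite hdc_enc. reflexivity.
Qed.
Open Scope nat_scope.

Definition statusL (f : nat -> nat) m :=
  nat_rect (fun _ => nat) 0 (fun t r => cond r (cond (f (2*t+1)) 0 (S t)) r) m.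
Definition statusR (f : nat -> nat) m :=
  nat_rect (fun _ => nat) 0 (fun t r => cond r (cond (f (2*t)) 0 (S t)) r) m.
Definition enth a b := EA2 (comp nthE) nthc a b.
Definition stLP := RPrim (comp (EConst 0)) (comp (econd (EVar 1)
   (econd (enth (eadd (emul (EConst 2) (EVar 0)) (EConst 1)) (EVar 2)) (EConst 0) (ES (EVar 0))) (EVar 1))).
Definition stRP := RPrim (comp (EConst 0)) (comp (econd (EVar 1)
   (econd (enth (emul (EConst 2) (EVar 0)) (EVar 2)) (EConst 0) (ES (EVar 0))) (EVar 1))).
Definition stLf m N := statusL (fun t => nthc t N) m.
Definition stRf m N := statusR (fun t => nthc t N) m.
Lemma stL_spec : spec2 stLP stLf.
Proof. intros m N. eapply reval_eq. apply prim_ok. apply comp_ok; okt. intros; apply comp_ok; okt.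
  reflexivity. Qed.
Lemma stR_spec : spec2 stRP stRf.
Proof. intros m N. eapply reval_eq. apply prim_ok. apply comp_ok; okt. intros; apply comp_ok; okt.
  reflexivity. Qed.
#[export] Hint Resolve stL_spec stR_spec : core.

Definition nt x := cond x 1 0.
Definition band x y := cond x 0 y.
Definition bor x y := cond x y 1.
Definition ltq a1 b1 c1 a2 b2 c2 := ltn (a1 * S c2 + b2 * S c1) (a2 * S c1 + b1 * S c2).
Definition leq3 a1 b1 c1 a2 b2 c2 := nt (ltq a2 b2 c2 a1 b1 c1).

Definition complc (SL SR : nat -> nat) (n : nat) : nat :=
 let k := ufst n in let m := usnd n in
 let r := ufst k in let s := usnd k in
 let a1 := ufst r in let b1 := ufst (usnd r) in let c1 := usnd (usnd r) in
 let a2 := ufst s in let b2 := ufst (usnd s) in let c2 := usnd (usnd s) in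
 let sl := SL m in let sr := SR m in
 let eL := cond sl m (pred sl) in let eR := cond sr m (pred sr) in
 let PLb := 3*eL+4 in let ULb := cond sl 3 PLb in let ULc := cond sl 0 eL in
 let QRa := 3*eR+4 in let VRa := cond sr 3 QRa in let VRc := cond sr 0 eR in
 band (bor (leq3 a2 b2 c2 0 PLb eL) (bor (leq3 0 ULb ULc a1 b1 c1) (leq3 a2 b2 c2 a1 b1 c1)))
      (bor (leq3 a2 b2 c2 VRa 0 VRc) (bor (leq3 QRa 0 eR a1 b1 c1) (leq3 a2 b2 c2 a1 b1 c1))).
Definition meetc (SL SR : nat -> nat) (n : nat) : nat :=
 let k := ufst n in let m := usnd n in
 let r := ufst k in let s := usnd k in
 let a1 := ufst r in let b1 := ufst (usnd r) in let c1 := usnd (usnd r) in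
 let a2 := ufst s in let b2 := ufst (usnd s) in let c2 := usnd (usnd s) in
 let sl := SL m in let sr := SR m in
 let eL := cond sl m (pred sl) in let eR := cond sr m (pred sr) in
 let PLb := 3*eL+4 in let ULb := cond sl 3 PLb in let ULc := cond sl 0 eL in
 let QRa := 3*eR+4 in let VRa := cond sr 3 QRa in let VRc := cond sr 0 eR in
 bor (band (ltq a1 b1 c1 0 PLb eL) (ltq 0 ULb ULc a2 b2 c2))
     (band (ltq a1 b1 c1 VRa 0 VRc) (ltq QRa 0 eR a2 b2 c2)).
Definition gK' (SL SR : nat -> nat) (i : nat) : nat :=
 let h := d2 i in let n := d2 h in
 cond (m2 i) 0 (cond (m2 h) (cond (complc SL SR n) 0 (S (ufst n))) (cond (meetc SL SR n) 0 (S (ufst n)))).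

Definition ntE := econd (EVar 0) (EConst 1) (EConst 0).
Definition bandE := econd (EVar 0) (EConst 0) (EVar 1).
Definition borE := econd (EVar 0) (EVar 1) (EConst 1).
Lemma nt_spec : spec1 (comp ntE) nt. Proof. intros x. apply (comp_ok ntE [x]); okt. Qed.
Lemma band_spec : spec2 (comp bandE) band. Proof. intros x y. apply (comp_ok bandE [x;y]); okt. Qed.
Lemma bor_spec : spec2 (comp borE) bor. Proof. intros x y. apply (comp_ok borE [x;y]); okt. Qed.
#[export] Hint Resolve nt_spec band_spec bor_spec : core.
Definition ent a := EA1 (comp ntE) nt a.
Definition eband a b := EA2 (comp bandE) band a b.
Definition ebor a b := EA2 (comp borE) bor a b.
Definition eltq a1 b1 c1 a2 b2 c2 :=
  eltn (eadd (emul a1 (ES c2)) (emul b2 (ES c1))) (eadd (emul a2 (ES c1)) (emul b1 (ES c2))).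
Definition eleq3 a1 b1 c1 a2 b2 c2 := ent (eltq a2 b2 c2 a1 b1 c1).

Definition gKE : expr :=
 let i := EVar 0 in let N := EVar 1 in
 let h := ed2 i in let n := ed2 h in
 let k := eufst n in let m := eusnd n in
 let r := eufst k in let s := eusnd k in
 let a1 := eufst r in let b1 := eufst (eusnd r) in let c1 := eusnd (eusnd r) in
 let a2 := eufst s in let b2 := eufst (eusnd s) in let c2 := eusnd (eusnd s) in
 let sl := EA2 stLP stLf m N in let sr := EA2 stRP stRf m N in
 let eL := econd sl m (epred sl) in let eR := econd sr m (epred sr) in
 let PLb := eadd (emul (EConst 3) eL) (EConst 4) in let ULb := econd sl (EConst 3) PLb in
 let ULc := econd sl (EConst 0) eL in
 let QRa := eadd (emul (EConst 3) eR) (EConst 4) in let VRa := econd sr (EConst 3) QRa in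
 let VRc := econd sr (EConst 0) eR in
 let z := EConst 0 in
 let meetc := ebor (eband (eltq a1 b1 c1 z PLb eL) (eltq z ULb ULc a2 b2 c2))
                  (eband (eltq a1 b1 c1 VRa z VRc) (eltq QRa z eR a2 b2 c2)) in
 let complc := eband (ebor (eleq3 a2 b2 c2 z PLb eL) (ebor (eleq3 z ULb ULc a1 b1 c1) (eleq3 a2 b2 c2 a1 b1 c1)))
                    (ebor (eleq3 a2 b2 c2 VRa z VRc) (ebor (eleq3 QRa z eR a1 b1 c1) (eleq3 a2 b2 c2 a1 b1 c1))) in
 econd (em2 i) (EConst 0) (econd (em2 h) (econd complc (EConst 0) (ES k)) (econd meetc (EConst 0) (ES k))).

Definition gKN i N := gK' (fun m => stLf m N) (fun m => stRf m N) i.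
Lemma gK_spec : spec2 (comp gKE) gKN.
Proof. intros i N. eapply reval_eq. apply (comp_ok gKE [i;N]). okt. reflexivity. Qed.
#[export] Hint Resolve gK_spec : core.

Definition Bv c L N := nat_rect (fun _ => nat) 0 (fun n r => S (cpair (gKN (L - S n) N) r)) c.
Definition BP := RPrim (comp (EConst 0))
  (comp (ES (ecpair (EA2 (comp gKE) gKN (esub (EVar 2) (ES (EVar 0))) (EVar 3)) (EVar 1)))).
Lemma B_spec : spec3 BP Bv.
Proof. intros c L N. eapply reval_eq. apply prim_ok. apply comp_ok; okt. intros; apply comp_ok; okt.
  reflexivity. Qed.
#[export] Hint Resolve B_spec : core.
Definition KE := EA3 BP Bv (EA1 lenP lenc (EVar 0)) (EA1 lenP lenc (EVar 0)) (EVar 0).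
Definition wK (l : list nat) := map (fun i => gKN i (enc l)) (seq 0 (length l)).

Lemma enc_inj l l' : enc l = enc l' -> l = l'.
Proof.
  revert l'; induction l; intros [|x l'] H; simpl in *; try lia; auto.
  injection H; intro H'. apply cpair_inj in H'. destruct H' as [-> H2]. f_equal; auto.
Qed.
Lemma lenc_enc l : lenc (enc l) = length l.
Proof. unfold lenc. f_equal. apply enc_inj. apply decf_ok. lia. Qed.

Lemma Bv_eq c L N : c <= L -> Bv c L N = enc (map (fun i => gKN i N) (seq (L - c) c)).
Proof.
  induction c; intros H; simpl; auto.
  rewrite IHc by lia. replace (L - c) with (S (L - S c)) by lia. reflexivity.
Qed.

Lemma wK_rec : recursive_word wK.
Proof.
  exists (comp KE). intros l. eapply reval_eq. apply (comp_ok KE [enc l]); okt.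
  simpl. rewrite lenc_enc. rewrite Bv_eq by lia. rewrite Nat.sub_diag. reflexivity.
Qed.
Open Scope nat_scope.

Lemma enc_ge_len l : length l <= enc l.
Proof. induction l; simpl; auto. pose proof (cpair_ge_r a (enc l)). lia. Qed.
Lemma enc_app_ge l t : enc l <= enc (l ++ t).
Proof. induction l; simpl; try lia. pose proof (cpair_mono_r a _ _ IHl). lia. Qed.

Lemma wH_mono : monotone_word wH.
Proof.
  intros l l' [t ->]. unfold wH. destruct l as [|x l].
  - simpl. exists (repeat (vH (hd 0 t)) (enc t)). reflexivity.
  - simpl hd. pose proof (enc_app_ge (x :: l) t).
    exists (repeat (vH x) (enc ((x :: l) ++ t) - enc (x :: l))).
    rewrite <- repeat_app. f_equal. lia.
Qed.

Lemma nth_pref p k t : t < k -> nth t (pref p k) 0 = p t.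
Proof.
  intros H. unfold pref. rewrite nth_indep with (d' := p 0) by (rewrite length_map, length_seq; lia).
  rewrite map_nth, seq_nth by lia. reflexivity.
Qed.
Lemma length_pref p k : length (pref p k) = k.
Proof. unfold pref. rewrite length_map, length_seq. reflexivity. Qed.

Definition Hrel : pfun := fun b a => a = (fun _ => vH (b 0)).
Lemma wH_computes q : computes wH q (fun _ => vH (q 0)).
Proof.
  intros n. exists (S n). unfold wH.
  replace (hd 0 (pref q (S n))) with (q 0) by reflexivity.
  apply nth_error_repeat. pose proof (enc_ge_len (pref q (S n))). rewrite length_pref in H. lia.
Qed.
Lemma H_comp : pcomputable Hrel.
Proof.
  split. intros p q q' -> ->. reflexivity.
  exists wH. split. apply wH_rec. split. apply wH_mono.
  intros p q ->. apply wH_computes.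
Qed.

Lemma statusL_S f m : statusL f (S m) = cond (statusL f m) (cond (f (2*m+1)) 0 (S m)) (statusL f m).
Proof. reflexivity. Qed.
Lemma statusR_S f m : statusR f (S m) = cond (statusR f m) (cond (f (2*m)) 0 (S m)) (statusR f m).
Proof. reflexivity. Qed.
Lemma statusL_loc f g m : (forall t, t < 2 * m -> f t = g t) -> statusL f m = statusL g m.
Proof.
  induction m; intros H. reflexivity. rewrite !statusL_S. rewrite IHm by (intros; apply H; lia).
  rewrite (H (2*m+1)) by lia. reflexivity.
Qed.
Lemma statusR_loc f g m : (forall t, t < 2 * m -> f t = g t) -> statusR f m = statusR g m.
Proof.
  induction m; intros H. reflexivity. rewrite !statusR_S. rewrite IHm by (intros; apply H; lia).
  rewrite (H (2*m)) by lia. reflexivity.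
Qed.
Lemma gK_loc SL SR SL' SR' i :
  SL (usnd (d2 (d2 i))) = SL' (usnd (d2 (d2 i))) ->
  SR (usnd (d2 (d2 i))) = SR' (usnd (d2 (d2 i))) -> gK' SL SR i = gK' SL' SR' i.
Proof. intros H1 H2. unfold gK', complc, meetc. cbv zeta. rewrite H1, H2. reflexivity. Qed.
Lemma m0_le i : 2 * usnd (d2 (d2 i)) <= i.
Proof. pose proof (usnd_le (d2 (d2 i))). pose proof (d2_le i). pose proof (d2_le (d2 i)). lia. Qed.

Definition rK (p : Baire) : Baire := fun i => gK' (statusL p) (statusR p) i.
Lemma gKN_loc f l i : (forall t, t < i -> f t = nth t l 0) ->
  gKN i (enc l) = gK' (statusL f) (statusR f) i.
Proof.
  intros H. unfold gKN, stLf, stRf. pose proof (m0_le i).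
  apply gK_loc.
  - apply statusL_loc. intros t Ht. rewrite nthc_enc, H by lia. reflexivity.
  - apply statusR_loc. intros t Ht. rewrite nthc_enc, H by lia. reflexivity.
Qed.

Lemma wK_mono : monotone_word wK.
Proof.
  intros l l' [t ->]. unfold wK. rewrite length_app, seq_app, map_app.
  eexists. f_equal. apply map_ext_in. intros i Hi. apply in_seq in Hi.
  rewrite (gKN_loc (fun t => nth t l 0) l) by auto.
  rewrite (gKN_loc (fun t => nth t l 0) (l ++ t)). reflexivity.
  intros u Hu. rewrite app_nth1 by lia. reflexivity.
Qed.
Definition Krel : pfun := fun p a => a = rK p.
Lemma K_comp : pcomputable Krel.
Proof.
  split. intros p q q' -> ->. reflexivity.
  exists wK. split. apply wK_rec. split. apply wK_mono.
  intros p q ->. intros n. exists (S n). unfold wK. rewrite length_pref.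
  rewrite nth_error_map, nth_error_seq. replace (n <? S n) with true by (symmetry; apply Nat.ltb_lt; lia).
  change (Some (gKN (0+n) (enc (pref p (S n)))) = Some (rK p n)).
  rewrite Nat.add_0_l. f_equal. unfold rK. apply gKN_loc. intros t Ht. rewrite nth_pref by lia. reflexivity.
Qed.
Open Scope nat_scope.

Lemma ltn_val x y : ltn x y = if x <? y then 1 else 0.
Proof. unfold ltn, cond. destruct (x <? y) eqn:E.
  apply Nat.ltb_lt in E. destruct (y - x) eqn:E2; lia.
  apply Nat.ltb_ge in E. replace (y - x) with 0 by lia. reflexivity. Qed.
Lemma ltn_iff x y : ltn x y <> 0 <-> x < y.
Proof. rewrite ltn_val. destruct (x <? y) eqn:E. apply Nat.ltb_lt in E. split; auto.
  apply Nat.ltb_ge in E. split; intros; lia. Qed.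
Lemma band_iff x y : band x y <> 0 <-> x <> 0 /\ y <> 0.
Proof. unfold band, cond. destruct x; split; intros; try tauto; lia. Qed.
Lemma bor_iff x y : bor x y <> 0 <-> x <> 0 \/ y <> 0.
Proof. unfold bor, cond. destruct x; split; intros; try tauto; lia. Qed.
Lemma nt_iff x : nt x <> 0 <-> x = 0.
Proof. unfold nt, cond. destruct x; split; intros; lia. Qed.
Lemma cond_S0 c k : c <> 0 -> cond c 0 (S k) = S k.
Proof. destruct c; simpl; auto. lia. Qed.
Lemma cond_00 c k : c = 0 -> cond c 0 (S k) = 0.
Proof. intros ->. reflexivity. Qed.
Lemma cond_S0_inv c k k' : cond c 0 (S k) = S k' -> c <> 0 /\ k = k'.
Proof. destruct c; simpl; intros H; split; lia. Qed.

Open Scope R_scope.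

Lemma INR_S_pos c : 0 < INR (S c).
Proof. apply lt_0_INR. lia. Qed.

Lemma qR_lt_iff a1 b1 c1 a2 b2 c2 :
  qR a1 b1 c1 < qR a2 b2 c2 <-> (a1 * S c2 + b2 * S c1 < a2 * S c1 + b1 * S c2)%nat.
Proof.
  unfold qR. pose proof (INR_S_pos c1) as P1. pose proof (INR_S_pos c2) as P2.
  set (C1 := INR (S c1)) in *. set (C2 := INR (S c2)) in *.
  set (u := (INR a1 - INR b1) / C1). set (w := (INR a2 - INR b2) / C2).
  assert (Hu : u * C1 = INR a1 - INR b1) by (unfold u; field; lra).
  assert (Hw : w * C2 = INR a2 - INR b2) by (unfold w; field; lra).
  split; intro H.
  - apply INR_lt. rewrite !plus_INR, !mult_INR. fold C1 C2.
    assert (u * (C1 * C2) < w * (C1 * C2)) by (apply Rmult_lt_compat_r; nra). nra.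
  - apply lt_INR in H. rewrite !plus_INR, !mult_INR in H. fold C1 C2 in H.
    assert (u * (C1 * C2) < w * (C1 * C2)) by nra.
    apply Rmult_lt_reg_r in H0; nra.
Qed.

Lemma ltq_iff a1 b1 c1 a2 b2 c2 : ltq a1 b1 c1 a2 b2 c2 <> 0%nat <-> qR a1 b1 c1 < qR a2 b2 c2.
Proof. unfold ltq. rewrite ltn_iff, qR_lt_iff. tauto. Qed.
Lemma leq3_iff a1 b1 c1 a2 b2 c2 : leq3 a1 b1 c1 a2 b2 c2 <> 0%nat <-> qR a1 b1 c1 <= qR a2 b2 c2.
Proof. unfold leq3. rewrite nt_iff. pose proof (ltq_iff a2 b2 c2 a1 b1 c1).
  split.
  - intros H0. destruct (Rle_dec (qR a1 b1 c1) (qR a2 b2 c2)) as [|n]; auto.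
    exfalso. assert (ltq a2 b2 c2 a1 b1 c1 <> 0%nat) by (apply H; lra). auto.
  - intros Hle. destruct (Nat.eq_dec (ltq a2 b2 c2 a1 b1 c1) 0) as [e|n]; auto.
    apply H in n. lra. Qed.

Definition qv r := qR (ufst r) (ufst (usnd r)) (usnd (usnd r)).
Lemma rat_code_iff r q : is_rat_code r q <-> q = qv r.
Proof.
  split.
  - intros (a & b & c & -> & ->). unfold qv. repeat (rewrite ?ufst_cpair, ?usnd_cpair). reflexivity.
  - intros ->. exists (ufst r), (ufst (usnd r)), (usnd (usnd r)). split; auto.
    rewrite !cpair_unpair. reflexivity.
Qed.
Lemma int_code_iff k lo hi : is_int_code k lo hi <-> lo = qv (ufst k) /\ hi = qv (usnd k).
Proof.
  split.
  - intros (r & s & -> & H1 & H2). rewrite ufst_cpair, usnd_cpair. rewrite rat_code_iff in H1, H2. auto.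
  - intros [-> ->]. exists (ufst k), (usnd k). rewrite cpair_unpair. rewrite !rat_code_iff. auto.
Qed.
Lemma qR_code a b c : is_rat_code (cpair a (cpair b c)) (qR a b c).
Proof. exists a, b, c. auto. Qed.
Open Scope nat_scope.

Lemma least (P : nat -> Prop) : (exists n, P n) -> exists n, P n /\ forall i, i < n -> ~ P i.
Proof.
  intros [n Hn]. induction n as [n IH] using (well_founded_induction lt_wf).
  destruct (classic (exists i, i < n /\ P i)) as [[i [Hi Pi]]|H].
  - apply (IH i Hi Pi).
  - exists n; split; auto. intros i Hi Pi. apply H; eauto.
Qed.

Definition zeroL (p : Baire) := forall j, p (2*j+1) = 0.
Definition firstL (p : Baire) j := p (2*j+1) <> 0 /\ forall i, i < j -> p (2*i+1) = 0.
Lemma firstL_uniq p j j' : firstL p j -> firstL p j' -> j = j'.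
Proof. intros [H1 H2] [H1' H2']. destruct (lt_eq_lt_dec j j') as [[h|h]|h]; auto.
  exfalso; apply H1; auto. exfalso; apply H1'; auto. Qed.

Lemma statusL_cases p m : (statusL p m = 0 /\ forall j, j < m -> p (2*j+1) = 0) \/
  (exists j, j < m /\ statusL p m = S j /\ firstL p j).
Proof.
  induction m.
  - left. split; auto. intros; lia.
  - rewrite statusL_S. destruct IHm as [[H0 H1]|(j & Hj & H0 & H1)].
    + rewrite H0. cbn [cond]. destruct (p (2*m+1)) eqn:E; cbn [cond].
      * left. split; [reflexivity|]. intros j Hj. destruct (Nat.eq_dec j m). subst; auto. apply H1; lia.
      * right. exists m. split; auto. split; auto. split; auto. lia.
    + rewrite H0. cbn [cond]. right. exists j. auto.
Qed.

Open Scope R_scope.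
Definition Pj j := qR 0 (3*j+4) j.
Lemma Pj_eq j : Pj j = -3 - / INR (S j).
Proof. unfold Pj, qR. pose proof (INR_S_pos j).
  replace (INR (3*j+4)) with (3 * INR (S j) + 1) by (rewrite S_INR, plus_INR, mult_INR; simpl; ring).
  simpl INR at 1. field. lra. Qed.
Lemma Pj_lt j : Pj j < -3.
Proof. rewrite Pj_eq. pose proof (INR_S_pos j). pose proof (Rinv_0_lt_compat _ H). lra. Qed.
Lemma Pj_mono j j' : (j <= j')%nat -> Pj j <= Pj j'.
Proof. intros H. rewrite !Pj_eq. assert (INR (S j) <= INR (S j')) by (apply le_INR; lia).
  pose proof (INR_S_pos j). assert (/ INR (S j') <= / INR (S j)) by (apply Rinv_le_contravar; lra). lra. Qed.
Lemma Pj_arch x : x < -3 -> exists m, x < Pj m.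
Proof. intros H. destruct (archimed_cor1 (-3 - x)) as [N [HN1 HN2]]. lra.
  exists (pred N). rewrite Pj_eq. replace (S (pred N)) with N by lia. lra. Qed.
Lemma qR_m3 : qR 0 3 0 = -3.
Proof. unfold qR. simpl. field. Qed.

Definition eLf p m := cond (statusL p m) m (pred (statusL p m)).
Definition lowL p m := qR 0 (3 * eLf p m + 4) (eLf p m).
Definition upL p m := qR 0 (cond (statusL p m) 3 (3 * eLf p m + 4)) (cond (statusL p m) 0 (eLf p m)).

Lemma segL_cases p m :
  ((forall j, (j < m)%nat -> p (2*j+1)%nat = 0%nat) /\ lowL p m = Pj m /\ upL p m = -3) \/
  (exists j, (j < m)%nat /\ firstL p j /\ lowL p m = Pj j /\ upL p m = Pj j).
Proof.
  unfold lowL, upL, eLf. destruct (statusL_cases p m) as [[H0 H1]|(j & Hj & H0 & H1)]; rewrite H0.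
  - left. simpl. split; auto. split; auto. apply qR_m3.
  - right. exists j. simpl. auto.
Qed.

Definition leftpt p z := (zeroL p /\ z = -3) \/ (exists j, firstL p j /\ z = Pj j).

Lemma leftpt_ex p : exists z, leftpt p z.
Proof.
  destruct (classic (exists j, p (2*j+1)%nat <> 0%nat)) as [H|H].
  - destruct (least _ H) as [j [Hj1 Hj2]]. exists (Pj j). right. exists j. split; auto.
    split; auto. intros i Hi. destruct (Nat.eq_dec (p (2*i+1)%nat) 0); auto. exfalso; eapply Hj2; eauto.
  - exists (-3). left. split; auto. intros j. destruct (Nat.eq_dec (p (2*j+1)%nat) 0); auto.
    exfalso; apply H; eauto.
Qed.
Lemma leftpt_uniq p z z' : leftpt p z -> leftpt p z' -> z = z'.
Proof.
  intros [[H1 ->]|(j & [Hj1 Hj2] & ->)] [[H1' ->]|(j' & [Hj1' Hj2'] & ->)]; auto.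
  - exfalso. apply Hj1'. apply H1.
  - exfalso. apply Hj1. apply H1'.
  - f_equal. apply (firstL_uniq p); split; auto.
Qed.

Lemma leftpt_seg p m z : leftpt p z -> lowL p m <= z <= upL p m.
Proof.
  intros Hz. destruct (segL_cases p m) as [(H0 & -> & ->)|(j & Hj & Hf & -> & ->)].
  - destruct Hz as [[_ ->]|(j & [Hj1 Hj2] & ->)].
    + pose proof (Pj_lt m). lra.
    + assert (m <= j)%nat. { destruct (le_lt_dec m j); auto. exfalso; apply Hj1; auto. }
      pose proof (Pj_mono _ _ H). pose proof (Pj_lt j). lra.
  - assert (leftpt p (Pj j)) by (right; exists j; auto).
    rewrite (leftpt_uniq p z (Pj j)); auto. lra.
Qed.

Lemma leftpt_meet p z lo hi : leftpt p z -> lo < z < hi -> exists m, lo < lowL p m /\ upL p m < hi.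
Proof.
  intros Hz Hi. destruct Hz as [[H0 ->]|(j & Hj & ->)].
  - destruct (Pj_arch lo) as [m Hm]. lra. exists m.
    destruct (segL_cases p m) as [(_ & -> & ->)|(j & _ & [Hj _] & _)]. lra.
    exfalso. apply Hj. apply H0.
  - exists (S j). destruct (segL_cases p (S j)) as [(H0 & _)|(j' & _ & Hf & -> & ->)].
    + exfalso. destruct Hj as [Hj _]. apply Hj. apply H0. lia.
    + rewrite (firstL_uniq p j' j) by auto. lra.
Qed.

Lemma leftpt_avoid p x : (forall z, leftpt p z -> x <> z) ->
  exists m0, forall m, (m0 <= m)%nat -> x < lowL p m \/ upL p m < x.
Proof.
  intros Hx. destruct (classic (zeroL p)) as [HZ|HZ].
  - assert (x <> -3) by (apply Hx; left; auto).
    destruct (Rlt_dec x (-3)) as [Hlt|Hge].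
    + destruct (Pj_arch x Hlt) as [m0 Hm0]. exists m0. intros m Hm. left.
      destruct (segL_cases p m) as [(_ & -> & _)|(j & _ & [Hj _] & _)].
      pose proof (Pj_mono _ _ Hm). lra. exfalso; apply Hj, HZ.
    + exists 0%nat. intros m _. right.
      destruct (segL_cases p m) as [(_ & _ & ->)|(j & _ & [Hj _] & _)]. lra. exfalso; apply Hj, HZ.
  - destruct (leftpt_ex p) as [z Hz]. destruct Hz as [[H0 _]|(j & Hj & ->)]. contradiction.
    assert (x <> Pj j) by (apply Hx; right; eauto).
    exists (S j). intros m Hm.
    destruct (segL_cases p m) as [(H0 & _)|(j' & _ & Hf & -> & ->)].
    + exfalso. destruct Hj as [Hj _]. apply Hj. apply H0. lia.
    + rewrite (firstL_uniq p j' j); auto. destruct (Rlt_dec x (Pj j)); [left; auto | right; lra].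
Qed.

Definition pR (p : Baire) : Baire := fun t => p (t - 1)%nat.
Lemma statusR_L p m : statusR p m = statusL (pR p) m.
Proof. induction m. reflexivity. rewrite statusR_S, statusL_S, IHm. unfold pR.
  replace (2*m+1-1)%nat with (2*m)%nat by lia. reflexivity. Qed.
Definition eRf p m := cond (statusR p m) m (pred (statusR p m)).
Definition lowR p m := qR (cond (statusR p m) 3 (3 * eRf p m + 4)) 0 (cond (statusR p m) 0 (eRf p m)).
Definition upR p m := qR (3 * eRf p m + 4) 0 (eRf p m).
Lemma qR_neg a c : qR a 0 c = - qR 0 a c.
Proof. unfold qR. pose proof (INR_S_pos c). change (INR 0) with 0. field. lra. Qed.
Lemma lowR_eq p m : lowR p m = - upL (pR p) m.
Proof. unfold lowR, upL, eRf, eLf. rewrite statusR_L. apply qR_neg. Qed.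
Lemma upR_eq p m : upR p m = - lowL (pR p) m.
Proof. unfold upR, lowL, eRf, eLf. rewrite statusR_L. apply qR_neg. Qed.

Definition Qj j := qR (3*j+4) 0 j.
Definition zeroR (p : Baire) := forall j, p (2*j)%nat = 0%nat.
Definition firstR (p : Baire) j := p (2*j)%nat <> 0%nat /\ forall i, (i < j)%nat -> p (2*i)%nat = 0%nat.
Definition rightpt p z := (zeroR p /\ z = 3) \/ (exists j, firstR p j /\ z = Qj j).
Lemma pR_odd p j : pR p (2*j+1)%nat = p (2*j)%nat.
Proof. unfold pR. f_equal. lia. Qed.
Lemma rightpt_iff p z : rightpt p z <-> leftpt (pR p) (-z).
Proof.
  unfold rightpt, leftpt, zeroR, zeroL, firstR, firstL, Qj. setoid_rewrite pR_odd.
  split; intros [[H1 H2]|(j & Hj & H2)].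
  - left. split; auto. lra.
  - right. exists j. split; auto. rewrite H2, qR_neg. unfold Pj. lra.
  - left. split; auto. lra.
  - right. exists j. split; auto. unfold Pj in H2. rewrite qR_neg. lra.
Qed.
Lemma rightpt_ex p : exists z, rightpt p z.
Proof. destruct (leftpt_ex (pR p)) as [z Hz]. exists (-z). apply rightpt_iff. rewrite Ropp_involutive. auto. Qed.
Lemma rightpt_uniq p z z' : rightpt p z -> rightpt p z' -> z = z'.
Proof. rewrite !rightpt_iff. intros H1 H2. pose proof (leftpt_uniq _ _ _ H1 H2). lra. Qed.
Lemma rightpt_seg p m z : rightpt p z -> lowR p m <= z <= upR p m.
Proof. rewrite rightpt_iff, lowR_eq, upR_eq. intros H. pose proof (leftpt_seg _ m _ H). lra. Qed.
Lemma rightpt_meet p z lo hi : rightpt p z -> lo < z < hi -> exists m, lo < lowR p m /\ upR p m < hi.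
Proof. rewrite rightpt_iff. intros H Hi. destruct (leftpt_meet _ _ (-hi) (-lo) H) as [m Hm]. lra.
  exists m. rewrite lowR_eq, upR_eq. lra. Qed.
Lemma rightpt_avoid p x : (forall z, rightpt p z -> x <> z) ->
  exists m0, forall m, (m0 <= m)%nat -> x < lowR p m \/ upR p m < x.
Proof. intros Hx. destruct (leftpt_avoid (pR p) (-x)) as [m0 Hm0].
  - intros z Hz. assert (rightpt p (-z)) by (apply rightpt_iff; rewrite Ropp_involutive; auto).
    apply Hx in H. lra.
  - exists m0. intros m Hm. rewrite lowR_eq, upR_eq. specialize (Hm0 m Hm). lra.
Qed.
Lemma Qj_gt j : Qj j > 3.
Proof. unfold Qj. rewrite qR_neg. fold (Pj j). pose proof (Pj_lt j). lra. Qed.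
Open Scope nat_scope.

Lemma rK_even p n : rK p (2*n) = 0.
Proof. unfold rK, gK'. cbv zeta. rewrite m2_even. reflexivity. Qed.
Lemma rK_compl p n : rK p (2*(2*n)+1) = cond (complc (statusL p) (statusR p) n) 0 (S (ufst n)).
Proof. unfold rK, gK'. cbv zeta. rewrite m2_odd, d2_odd, m2_even, d2_even. reflexivity. Qed.
Lemma rK_meet p n : rK p (2*(2*n+1)+1) = cond (meetc (statusL p) (statusR p) n) 0 (S (ufst n)).
Proof. unfold rK, gK'. cbv zeta. rewrite m2_odd, d2_odd, m2_odd, d2_odd. reflexivity. Qed.

Open Scope R_scope.
Lemma complc_iff p n : complc (statusL p) (statusR p) n <> 0%nat <->
  let k := ufst n in let m := usnd n in let lo := qv (ufst k) in let hi := qv (usnd k) in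
  (hi <= lowL p m \/ upL p m <= lo \/ hi <= lo) /\ (hi <= lowR p m \/ upR p m <= lo \/ hi <= lo).
Proof.
  unfold complc. cbv zeta. rewrite band_iff, !bor_iff, !leq3_iff.
  unfold lowL, upL, lowR, upR, eLf, eRf, qv. tauto.
Qed.
Lemma meetc_iff p n : meetc (statusL p) (statusR p) n <> 0%nat <->
  let k := ufst n in let m := usnd n in let lo := qv (ufst k) in let hi := qv (usnd k) in
  (lo < lowL p m /\ upL p m < hi) \/ (lo < lowR p m /\ upR p m < hi).
Proof.
  unfold meetc. cbv zeta. rewrite bor_iff, !band_iff, !ltq_iff.
  unfold lowL, upL, lowR, upR, eLf, eRf, qv. tauto.
Qed.
Lemma qv_cpair a b c : qv (cpair a (cpair b c)) = qR a b c.
Proof. unfold qv. repeat (rewrite ?ufst_cpair, ?usnd_cpair). reflexivity. Qed.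

Lemma IZR_nat_diff z : exists a b, IZR z = INR a - INR b.
Proof. exists (Z.to_nat z), (Z.to_nat (- z)). rewrite !INR_IZR_INZ, <- minus_IZR. f_equal. lia. Qed.

Lemma rat_near x d : 0 < d -> exists a b c a' b' c',
  x - d < qR a b c < x /\ x < qR a' b' c' < x + d.
Proof.
  intros Hd. destruct (archimed_cor1 (d/2)) as [N [HN1 HN2]]. lra.
  set (C := INR N). assert (HC : 0 < C) by (apply lt_0_INR; lia).
  destruct (archimed (x * C)) as [A1 A2].
  set (t := (up (x*C) - 1)%Z).
  assert (T1 : IZR t <= x * C) by (unfold t; rewrite minus_IZR; simpl; lra).
  assert (T2 : x * C < IZR t + 1) by (unfold t; rewrite minus_IZR; simpl; lra).
  destruct (IZR_nat_diff (t - 1)) as [a [b Hab]].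
  destruct (IZR_nat_diff (t + 2)) as [a' [b' Hab']].
  rewrite minus_IZR in Hab. rewrite plus_IZR in Hab'. simpl in Hab, Hab'.
  exists a, b, (pred N), a', b', (pred N).
  unfold qR. replace (S (pred N)) with N by lia. fold C. rewrite <- Hab, <- Hab'.
  assert (/ C < d / 2) by exact HN1.
  assert (E1 : (IZR t - 1) / C = IZR t / C - / C) by (field; lra).
  assert (E2 : (IZR t + 2) / C = IZR t / C + 2 * / C) by (field; lra).
  assert (E3 : IZR t / C <= x) by (apply Rmult_le_reg_r with C; auto; unfold Rdiv; rewrite Rmult_assoc, Rinv_l; lra).
  assert (E4 : x < IZR t / C + / C).
  { apply Rmult_lt_reg_r with C; auto. rewrite Rmult_plus_distr_r. unfold Rdiv; rewrite Rmult_assoc, !Rinv_l; lra. }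
  assert (0 < / C) by (apply Rinv_0_lt_compat; auto).
  rewrite E1, E2. lra.
Qed.

Definition Aset (p : Baire) (z : R) : Prop := leftpt p z \/ rightpt p z.

Lemma seg_avoid_margin (x lw up : R) : x < lw \/ up < x -> exists d, 0 < d /\ (x + d <= lw \/ up <= x - d).
Proof. intros [H|H]. exists (lw - x). split; lra. exists (x - up). split; lra. Qed.

Lemma closed_name p : delta closed_space (fun n => rK p (2*n+1)%nat) (Aset p).
Proof.
  unfold closed_space. cbn [delta]. split.
  - intros x. split.
    + intros HnA.
      destruct (leftpt_avoid p x) as [m1 Hm1]. { intros z Hz ->. apply HnA. left; auto. }
      destruct (rightpt_avoid p x) as [m2 Hm2]. { intros z Hz ->. apply HnA. right; auto. }
      set (m := Nat.max m1 m2).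
      destruct (seg_avoid_margin _ _ _ (Hm1 m ltac:(lia))) as [d1 [Hd1 HL]].
      destruct (seg_avoid_margin _ _ _ (Hm2 m ltac:(lia))) as [d2 [Hd2 HR]].
      destruct (rat_near x (Rmin d1 d2)) as (a & b & c & a' & b' & c' & Hlo & Hhi).
      { apply Rmin_glb_lt; auto. }
      pose proof (Rmin_l d1 d2). pose proof (Rmin_r d1 d2).
      set (k := cpair (cpair a (cpair b c)) (cpair a' (cpair b' c'))).
      exists (cpair k m), k, (qR a b c), (qR a' b' c').
      split; [|split].
      * rewrite rK_compl, ufst_cpair. apply cond_S0. apply complc_iff. cbv zeta.
        rewrite ufst_cpair, usnd_cpair. unfold k. rewrite ufst_cpair, usnd_cpair, !qv_cpair.
        split; lra.
      * apply int_code_iff. unfold k. rewrite ufst_cpair, usnd_cpair, !qv_cpair. auto.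
      * lra.
    + intros (n & k & lo & hi & Hn & Hc & Hx) HA.
      rewrite rK_compl in Hn. apply cond_S0_inv in Hn. destruct Hn as [Hn <-].
      apply complc_iff in Hn. cbv zeta in Hn. apply int_code_iff in Hc. destruct Hc as [-> ->].
      destruct HA as [HA|HA].
      * pose proof (leftpt_seg p (usnd n) x HA). lra.
      * pose proof (rightpt_seg p (usnd n) x HA). lra.
  - intros k. split.
    + intros (lo & hi & Hc & x & HA & Hx).
      assert (exists m, (lo < lowL p m /\ upL p m < hi) \/ (lo < lowR p m /\ upR p m < hi)) as [m Hm].
      { destruct HA as [HA|HA].
        - destruct (leftpt_meet p x lo hi HA Hx) as [m Hm]. exists m; auto.
        - destruct (rightpt_meet p x lo hi HA Hx) as [m Hm]. exists m; auto. }
      exists (cpair k m). rewrite rK_meet, ufst_cpair. apply cond_S0. apply meetc_iff. cbv zeta.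
      rewrite ufst_cpair, usnd_cpair. apply int_code_iff in Hc. destruct Hc as [<- <-]. auto.
    + intros (n & Hn). rewrite rK_meet in Hn. apply cond_S0_inv in Hn. destruct Hn as [Hn <-].
      apply meetc_iff in Hn. cbv zeta in Hn.
      exists (qv (ufst (ufst n))), (qv (usnd (ufst n))). split. apply int_code_iff; auto.
      destruct Hn as [Hn|Hn].
      * destruct (leftpt_ex p) as [z Hz]. exists z. split. left; auto.
        pose proof (leftpt_seg p (usnd n) z Hz). lra.
      * destruct (rightpt_ex p) as [z Hz]. exists z. split. right; auto.
        pose proof (rightpt_seg p (usnd n) z Hz). lra.
Qed.
Open Scope R_scope.

Lemma qR000 : qR 0 0 0 = 0.
Proof. unfold qR. change (INR 0) with 0. simpl. field. Qed.

Lemma Aset_closed p : closed_set (Aset p).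
Proof.
  destruct (leftpt_ex p) as [zL HL]. destruct (rightpt_ex p) as [zR HR].
  unfold closed_set, open_set, neighbourhood, included, disc, complementary.
  intros x Hx. assert (x <> zL) by (intros ->; apply Hx; left; auto).
  assert (x <> zR) by (intros ->; apply Hx; right; auto).
  assert (0 < Rmin (Rabs (x - zL)) (Rabs (x - zR))).
  { apply Rmin_glb_lt; apply Rabs_pos_lt; lra. }
  exists (mkposreal _ H1). simpl. intros y Hy [Hy2|Hy2].
  - rewrite (leftpt_uniq p y zL) in Hy by auto. rewrite Rabs_minus_sym in Hy.
    pose proof (Rmin_l (Rabs (x - zL)) (Rabs (x - zR))). lra.
  - rewrite (rightpt_uniq p y zR) in Hy by auto. rewrite Rabs_minus_sym in Hy.
    pose proof (Rmin_r (Rabs (x - zL)) (Rabs (x - zR))). lra.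
Qed.

Lemma zero_name p : delta real_space (fun n => rK p (2*n)%nat) 0.
Proof.
  unfold real_space. cbn [delta]. intros n. exists 0. rewrite rK_even. split.
  - exists 0%nat, 0%nat, 0%nat. split. reflexivity. symmetry; apply qR000.
  - rewrite Rminus_0_r, Rabs_R0. apply Rlt_le, Rinv_0_lt_compat, pow_lt. lra.
Qed.

Lemma vH_01 r : vH r = 0%nat \/ vH r = 1%nat.
Proof. unfold vH, cond. destruct (ltn _ _); auto. Qed.
Lemma vH_neg r : qv r < 0 -> vH r = 1%nat.
Proof.
  intros H. rewrite <- qR000 in H. unfold qv in H. apply qR_lt_iff in H.
  unfold vH. rewrite ltn_val. replace (ufst (usnd r) <? ufst r)%nat with false.
  reflexivity. symmetry. apply Nat.ltb_ge. lia.
Qed.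
Lemma vH_pos r : 0 < qv r -> vH r = 0%nat.
Proof.
  intros H. rewrite <- qR000 in H. unfold qv in H. apply qR_lt_iff in H.
  unfold vH. rewrite ltn_val. replace (ufst (usnd r) <? ufst r)%nat with true.
  reflexivity. symmetry. apply Nat.ltb_lt. lia.
Qed.

Theorem proposition4p20 : sW_le LLPO Proj_R.
Proof.
  exists Hrel, Krel. split; [apply H_comp|]. split; [apply K_comp|].
  intros G Gf GR p x Hx Hdom.
  destruct Hx as [Hx0 Hx1].
  change ((fun n => p (2*n)%nat) = fst x) in Hx0. change ((fun n => p (2*n+1)%nat) = snd x) in Hx1.
  change (forall (j j' : bool) (m m' : nat), (if j then snd x else fst x) m <> 0%nat ->
     (if j' then snd x else fst x) m' <> 0%nat -> j = j' /\ m = m') in Hdom.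
  assert (Hname : delta (prod_space real_space closed_space) (rK p) (0, Aset p)).
  { split. apply zero_name. apply closed_name. }
  assert (Hpd : pdom Proj_R (0, Aset p)).
  { split. apply Aset_closed. destruct (leftpt_ex p) as [z Hz]. exists z. left; auto. }
  destruct (GR _ _ Hname Hpd) as (b & Hb & y & Hy & Hyv).
  cbn in Hyv. destruct Hyv as [HyA Hymin].
  destruct (Hy 0%nat) as [q [Hq Hyq]]. rewrite rat_code_iff in Hq. subst q.
  simpl in Hyq. rewrite Rinv_1 in Hyq.
  exists (fun _ => vH (b 0%nat)). split.
  { exists (rK p), b. split; [reflexivity|]. split; auto. reflexivity. }
  rewrite <- Hx0, <- Hx1 in Hdom.
  destruct (vH_01 (b 0%nat)) as [E|E]; [exists false | exists true]; (split; [cbn [delta two_space]; rewrite E; reflexivity|]).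
  - change (forall m, fst x m = 0%nat). intros m. rewrite <- Hx0. cbv beta.
    destruct (Nat.eq_dec (p (2*m)%nat) 0) as [e|ne]; auto; exfalso. (* p0 nonzero at m: y must be -3 *)
    assert (HZ : zeroL p).
    { intros j. destruct (Nat.eq_dec (p (2*j+1)%nat) 0); auto. exfalso.
      destruct (Hdom false true m j ne n) as [H _]. discriminate. }
    assert (HL : leftpt p (-3)) by (left; auto).
    destruct HyA as [HyA|HyA].
    + destruct HyA as [[_ ->]|(j & [Hj _] & _)]; [|apply Hj, HZ].
      assert (qv (b 0%nat) < 0) by (unfold Rabs in Hyq; destruct (Rcase_abs _) in Hyq; lra).
      rewrite vH_neg in E by auto. discriminate.
    + pose proof (Hymin _ (or_introl HL)).
      destruct HyA as [[HzR _]|(j & _ & ->)].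
      * apply ne. apply HzR.
      * pose proof (Qj_gt j). rewrite !Rminus_0_l, !Rabs_Ropp in H.
        rewrite (Rabs_right (Qj j)), Rabs_left in H by lra. lra.
  - change (forall m, snd x m = 0%nat). intros m. rewrite <- Hx1. cbv beta.
    destruct (Nat.eq_dec (p (2*m+1)%nat) 0) as [e|ne]; auto; exfalso.
    assert (HZ : zeroR p).
    { intros j. destruct (Nat.eq_dec (p (2*j)%nat) 0); auto. exfalso.
      destruct (Hdom false true j m n ne) as [H _]. discriminate. }
    assert (HR : rightpt p 3) by (left; auto).
    destruct HyA as [HyA|HyA].
    + pose proof (Hymin _ (or_intror HR)).
      destruct HyA as [[HzL _]|(j & _ & ->)].
      * apply ne. apply HzL.
      * pose proof (Pj_lt j). rewrite !Rminus_0_l, !Rabs_Ropp in H.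
        rewrite Rabs_left, (Rabs_right 3) in H by lra. lra.
    + destruct HyA as [[_ ->]|(j & [Hj _] & _)]; [|apply Hj, HZ].
      assert (0 < qv (b 0%nat)) by (unfold Rabs in Hyq; destruct (Rcase_abs _) in Hyq; lra).
      rewrite vH_pos in E by auto. discriminate.
Qed.
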